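(* Let $h:\mathbb{R}\to\mathbb{R}$ satisfy $(h(x)-ax)(h(x)-bx)\le0$ for all $x\in\mathbb{R}$, where $b>a>0$, and let $N:\mathcal{L}_{2e+}^1\to\mathcal{L}_{2e+}^1$ be the static system $(Nu)(t)=h(u(t))$. Then $$\theta(N)\le\arccos\frac{2\sqrt{ab}}{a+b}.$$
   Context: $\mathcal{L}_2^1$ is the set of measurable $u:\mathbb{R}\to\mathbb{R}$ with $\|u\|_2^2=\int|u(t)|^2dt<\infty$, inner product $\langle u,v\rangle=\int u(t)v(t)\,dt$; $\mathcal{L}_{2+}=\{u\in\mathcal{L}_2:u(t)=0\ \text{for}\ t<0\}$; for $T\ge0$, $(\Gamma_Tu)(t)=u(t)$ for $t\le T$, $0$ for $t>T$; $\mathcal{L}_{2e+}=\{u:\Gamma_Tu\in\mathcal{L}_{2+}\ \forall T\ge0\}$. For a causal stable system $P$ (i.e. $\Gamma_TP=\Gamma_TP\Gamma_T$, $P$ maps $\mathcal{L}_{2+}$ to $\mathcal{L}_{2+}$ with finite gain $\sup_{0\ne u\in\mathcal{L}_{2+}}\|Pu\|_2/\|u\|_2$), the singular angle $\theta(P)\in[0,\pi]$ is given by $\cos\theta(P)=\inf\{\langle u,Pu\rangle/(\|u\|_2\|Pu\|_2):0\neq u\in\mathcal{L}_{2+},\ Pu\ne0\}$. *)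

(* Defs.v *)
From HB Require Import structures.
From mathcomp Require Import all_boot all_order all_algebra.
From mathcomp Require Import all_classical all_reals all_analysis.
Set Implicit Arguments. Unset Strict Implicit. Unset Printing Implicit Defensive.
Import Order.TTheory GRing.Theory Num.Theory.
Local Open Scope classical_set_scope.
Local Open Scope ring_scope.

Definition leb (R : realType) := (@lebesgue_measure R).

Definition inL2 (R : realType) (u : R -> R) : Prop :=
  measurable_fun setT u /\
  (@leb R).-integrable setT (fun t => ((u t) ^+ 2)%:E).

Definition inL2p (R : realType) (u : R -> R) : Prop :=
  inL2 u /\ (forall t : R, t < 0 -> u t = 0).

Definition ip (R : realType) (u v : R -> R) : R :=
  Rintegral (@leb R) setT (fun t => u t * v t).

Definition norm2 (R : realType) (u : R -> R) : R := Num.sqrt (ip u u).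

(* the set of ratios <u,Pu>/(||u|| ||Pu||) over 0 <> u in L_{2+}, Pu <> 0
   (nonzero as elements of L_2, i.e. nonzero norm) *)
Definition angle_ratios (R : realType) (P : (R -> R) -> (R -> R)) : set R :=
  [set r | exists u : R -> R,
     [/\ inL2p u, norm2 u != 0, norm2 (P u) != 0 &
         r = ip u (P u) / (norm2 u * norm2 (P u))]].

Definition singular_angle (R : realType) (P : (R -> R) -> (R -> R)) : R :=
  acos (inf (angle_ratios P)).

Definition static_sys (R : realType) (h : R -> R) : (R -> R) -> (R -> R) :=
  fun u t => h (u t).

(* Main.v *)
Require Import Defs.
From HB Require Import structures.
From mathcomp Require Import all_boot all_order all_algebra.
From mathcomp Require Import all_classical all_reals all_analysis.
From mathcomp Require Import lra measurable_realfun.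
Set Implicit Arguments. Unset Strict Implicit.
Import Order.TTheory GRing.Theory Num.Theory.
Local Open Scope classical_set_scope.
Local Open Scope ring_scope.

Lemma sec_bnd (R : realType) (a b x y : R) : 0 < a -> a < b ->
  (y - a * x) * (y - b * x) <= 0 ->
  (0 <= x -> a * x <= y /\ y <= b * x) /\ (x <= 0 -> b * x <= y /\ y <= a * x).
Proof. move=> ha hab h; split=> hx.
- have hab' : a * x <= b * x by nra.
  split; rewrite leNgt; apply/negP => hy.
  + have h1 : 0 < a * x - y by lra.
    have h2 : 0 < b * x - y by lra.
    have := mulr_gt0 h1 h2; nra.
  + have h1 : 0 < y - a * x by lra.
    have h2 : 0 < y - b * x by lra.
    have := mulr_gt0 h1 h2; nra.
- have hab' : b * x <= a * x by nra.
  split; rewrite leNgt; apply/negP => hy.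
  + have h1 : 0 < a * x - y by lra.
    have h2 : 0 < b * x - y by lra.
    have := mulr_gt0 h1 h2; nra.
  + have h1 : 0 < y - a * x by lra.
    have h2 : 0 < y - b * x by lra.
    have := mulr_gt0 h1 h2; nra.
Qed.

Lemma sec_sq (R : realType) (a b x y : R) : 0 < a -> a < b ->
  (y - a * x) * (y - b * x) <= 0 -> y ^+ 2 <= b ^+ 2 * x ^+ 2.
Proof. move=> ha hab h; have [h1 h2] := sec_bnd ha hab h.
have [hx|hx] := lerP 0 x.
- have [] := h1 hx => p q.
  have p1 : 0 <= b * x - y by lra.
  have p2 : 0 <= y + b * x by nra.
  have := mulr_ge0 p1 p2; nra.
- have [] := h2 (ltW hx) => p q.
  have p1 : 0 <= y - b * x by lra.
  have p2 : 0 <= - y - b * x by nra.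
  have := mulr_ge0 p1 p2; nra.
Qed.

Lemma sec_prod (R : realType) (a b x y : R) : 0 < a -> a < b ->
  (y - a * x) * (y - b * x) <= 0 -> `|x * y| <= b * x ^+ 2.
Proof. move=> ha hab h; have [h1 h2] := sec_bnd ha hab h.
have [hx|hx] := lerP 0 x.
- have [] := h1 hx => ? ?; rewrite ger0_norm; nra.
- have [] := h2 (ltW hx) => ? ?; rewrite ger0_norm; nra.
Qed.

Lemma integ_dom (R : realType) (u f : R -> R) (k : R) :
  measurable_fun setT f -> (forall t, `|f t| <= k * u t ^+ 2) -> inL2 u ->
  (@leb R).-integrable setT (EFin \o f).
Proof.
move=> mf hf [_ iu].
rewrite /leb in iu *.
apply: (le_integrable measurableT _ _ (integrableZl measurableT k iu)).
- exact/measurable_EFinP.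
- move=> t _ /=; rewrite lee_fin (le_trans (hf t))//.
  exact: ler_norm.
Qed.

Lemma ratio_ge (R : realType) (a b : R) (h : R -> R)
  (ha : 0 < a) (hab : a < b)
  (hmeas : measurable_fun [set: R] h)
  (hsec : forall x : R, (h x - a * x) * (h x - b * x) <= 0) (u : R -> R) :
  inL2p u -> norm2 u != 0 -> norm2 (static_sys h u) != 0 ->
  2 * Num.sqrt (a * b) / (a + b) <=
    ip u (static_sys h u) / (norm2 u * norm2 (static_sys h u)).
Proof.
move=> [hu _] nu nNu.
have mu : measurable_fun setT u by case: hu.
have mNu : measurable_fun setT (fun t => h (u t)) by exact: measurableT_comp.
have iA : (@leb R).-integrable setT (EFin \o (fun t => u t * u t)).
  apply: (integ_dom (k := 1)) hu; first exact: measurable_funM.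
  by move=> t; rewrite mul1r -expr2 ger0_norm ?sqr_ge0.
have iB : (@leb R).-integrable setT (EFin \o (fun t => h (u t) * h (u t))).
  apply: (integ_dom (k := b ^+ 2)) hu; first exact: measurable_funM.
  by move=> t; rewrite -expr2 ger0_norm ?sqr_ge0// (sec_sq ha hab (hsec _)).
have iP : (@leb R).-integrable setT (EFin \o (fun t => u t * h (u t))).
  apply: (integ_dom (k := b)) hu; first exact: measurable_funM.
  by move=> t; exact: (sec_prod ha hab (hsec _)).
have iQ : (@leb R).-integrable setT (EFin \o (fun t => (a * b) * (u t * u t))).
  apply: (integ_dom (k := a * b)) hu.
    by apply: measurable_funM => //; exact: measurable_funM.
  move=> t; rewrite -expr2 normrM [`|u t ^+ 2|]ger0_norm ?sqr_ge0 // ger0_norm //; nra.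
have iS : (@leb R).-integrable setT (EFin \o (fun t => (a + b) * (u t * h (u t)))).
  apply: (integ_dom (k := (a + b) * b)) hu.
    by apply: measurable_funM => //; exact: measurable_funM.
  move=> t; rewrite normrM ger0_norm; last by lra.
  rewrite -mulrA; apply: ler_wpM2l; [by lra|exact: (sec_prod ha hab (hsec _))].
have iBQ : (@leb R).-integrable setT
    (EFin \o (fun t => h (u t) * h (u t) + (a * b) * (u t * u t))).
  apply: (integ_dom (k := b ^+ 2 + a * b)) hu.
    apply: measurable_funD; first exact: measurable_funM.
    by apply: measurable_funM => //; exact: measurable_funM.
  move=> t; have := sec_sq ha hab (hsec (u t)).
  rewrite ger0_norm; first by rewrite -!expr2; nra.
  by rewrite -!expr2; apply: addr_ge0; [exact: sqr_ge0| apply: mulr_ge0; [nra|exact: sqr_ge0]].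
have key : Rintegral (@leb R) setT (fun t => h (u t) * h (u t) + (a * b) * (u t * u t))
   <= Rintegral (@leb R) setT (fun t => (a + b) * (u t * h (u t))).
  apply: le_Rintegral => // t _; have := hsec (u t); nra.
rewrite RintegralD // RintegralZl // RintegralZl // in key.
rewrite /norm2 /ip /static_sys.
set A := Rintegral (@leb R) setT (fun t => u t * u t) in key *.
set B := Rintegral (@leb R) setT (fun t => h (u t) * h (u t)) in key *.
set P := Rintegral (@leb R) setT (fun t => u t * h (u t)) in key *.
have A0 : 0 <= A by apply: Rintegral_ge0 => t _; rewrite -expr2 sqr_ge0.
have B0 : 0 <= B by apply: Rintegral_ge0 => t _; rewrite -expr2 sqr_ge0.
move: nu nNu; rewrite /norm2 /ip /static_sys -/A -/B => nu nNu.
have sa0 : 0 < Num.sqrt A by rewrite lt_neqAle eq_sym nu sqrtr_ge0.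
have sb0 : 0 < Num.sqrt B by rewrite lt_neqAle eq_sym nNu sqrtr_ge0.
have s0 : 0 <= Num.sqrt (a * b) by exact: sqrtr_ge0.
have sA : Num.sqrt A ^+ 2 = A by rewrite sqr_sqrtr.
have sB : Num.sqrt B ^+ 2 = B by rewrite sqr_sqrtr.
have sab : Num.sqrt (a * b) ^+ 2 = a * b by rewrite sqr_sqrtr //; nra.
have ab0 : 0 < a + b by lra.
rewrite ler_pdivlMr; last exact: mulr_gt0.
rewrite mulrAC ler_pdivrMr //.
have := sqr_ge0 (Num.sqrt B - Num.sqrt (a * b) * Num.sqrt A).
set x := Num.sqrt A in sa0 sA *; set y := Num.sqrt B in sb0 sB *;
set z := Num.sqrt (a * b) in s0 sab *.
move=> hsq; nra.
Qed.

Lemma acos_le (R : realType) (x y : R) : -1 <= x -> x <= y -> y <= 1 ->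
  acos y <= acos x.
Proof.
move=> h1 hxy h2.
have hx : -1 <= x <= 1 by apply/andP; split => //; exact: le_trans h2.
have hy : -1 <= y <= 1 by apply/andP; split => //; exact: le_trans hxy.
rewrite leNgt; apply/negP => H.
have ix : acos x \in `[0, pi] by rewrite in_itv /= acos_ge0 // acos_lepi.
have iy : acos y \in `[0, pi] by rewrite in_itv /= acos_ge0 // acos_lepi.
have := ltr_cos ix iy. rewrite H.
rewrite acosK ?acosK ?in_itv //= => hlt. by move: hlt; rewrite ltNge hxy.
Qed.

Lemma Rint_indic01 (R : realType) (c : R) :
  Rintegral (@leb R) setT (fun t => c * \1_(`[0, 1]) t) = c.
Proof.
rewrite RintegralZl //; last exact: integrable_indic_itv.
rewrite /Rintegral integral_indic // setIT.
have := @lebesgue_measure_itv R `[0, 1]. rewrite /= lte01 oppr0 adde0 => e.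
rewrite /leb e /= mulr1 //.
Qed.

Theorem proposition5 (R : realType) (a b : R) (h : R -> R)
  (ha : 0 < a) (hab : a < b)
  (hmeas : measurable_fun [set: R] h)
  (hsec : forall x : R, (h x - a * x) * (h x - b * x) <= 0) :
  singular_angle (static_sys h) <= acos (2 * Num.sqrt (a * b) / (a + b)).
Proof.
set c := 2 * Num.sqrt (a * b) / (a + b).
have h0 : h 0 = 0.
  have := hsec 0; rewrite !mulr0 !subr0 => H.
  by apply/eqP; rewrite -sqrf_eq0 eq_le sqr_ge0 andbT expr2.
have h1 : a <= h 1.
  by have [[] ] := (sec_bnd ha hab (hsec 1)).1 ler01; rewrite mulr1.
set u : R -> R := \1_(`[0, 1]).
have u01 t : u t = 0 \/ u t = 1.
  by rewrite /u indicE; case: (t \in _); [right|left].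
have Ne t : h (u t) = h 1 * u t.
  by case: (u01 t) => ->; rewrite ?h0 ?mulr0 ?mulr1.
have e1 : (fun t => u t * u t) = (fun t => 1 * \1_(`[0, 1]) t).
  by apply: funext => t; rewrite -/u mul1r; case: (u01 t) => -> /=; rewrite ?mulr0 ?mulr1.
have e2 : (fun t => u t * static_sys h u t) = (fun t => h 1 * \1_(`[0, 1]) t).
  apply: funext => t; rewrite /static_sys Ne -/u.
  by case: (u01 t) => -> /=; rewrite ?mulr0 ?mul0r ?mulr1 ?mul1r.
have e3 : (fun t => static_sys h u t * static_sys h u t)
    = (fun t => (h 1 * h 1) * \1_(`[0, 1]) t).
  apply: funext => t; rewrite /static_sys Ne -/u.
  by case: (u01 t) => -> /=; rewrite ?mulr0 ?mul0r ?mulr1 ?mul1r.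
have hu : inL2p u.
  split; last first.
    move=> t t0; rewrite /u indicE memNset //= in_itv /= leNgt t0 /=; by [].
  rewrite /inL2; split; first exact: measurable_indic.
  have -> : (fun t => (u t ^+ 2)%:E) = EFin \o \1_(`[0, 1]).
    by apply: funext => t; rewrite /= -/u expr2; case: (u01 t) => ->; rewrite ?mulr0 ?mulr1.
  exact: integrable_indic_itv.
have nu : norm2 u = 1.
  by rewrite /norm2 /ip e1 Rint_indic01 sqrtr1.
have nNu : norm2 (static_sys h u) = h 1.
  rewrite /norm2 /ip e3 Rint_indic01 -expr2 sqrtr_sqr ger0_norm //.
  exact: le_trans (ltW ha) h1.
have mem1 : angle_ratios (static_sys h) 1.
  exists u; split => //.
  - by rewrite nu oner_neq0.
  - by rewrite nNu; apply/eqP => e; move: h1; rewrite e; rewrite leNgt ha.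
  - rewrite nu nNu /ip e2 Rint_indic01 mul1r divff //.
    by apply/eqP => e; move: h1; rewrite e; rewrite leNgt ha.
have lb : lbound (angle_ratios (static_sys h)) c.
  move=> r [v [hv nv nNv ->]]; exact: ratio_ge.
have cinf : c <= inf (angle_ratios (static_sys h)).
  by apply: lb_le_inf => //; exists 1.
have inf1 : inf (angle_ratios (static_sys h)) <= 1.
  by apply: ge_inf => //; exists c.
have c0 : 0 <= c.
  rewrite /c; apply: divr_ge0; last lra.
  by apply: mulr_ge0 => //; exact: sqrtr_ge0.
rewrite /singular_angle; apply: acos_le => //.
lra.
Qed.
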